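(* For every real $h>g^*$ one has $g(h)<h$.
   Context: Fix $p\in(0,1)$, $q\in[0,1]$, $\lambda>0$. $\mathbb{Z}_+=\{0,1,2,\dots\}$. Let $d:[0,\infty)\to\mathbb{R}$ satisfy: (C1) $d(0)>0$; (C2) $d$ is convex and increasing; (C3) for every $\delta>0$, $r\mapsto d(r+\delta)-d(r)$ increases to $\infty$ as $r\to\infty$. Write $d(x,y):=d(\sqrt{x^2+y^2})$ for $(x,y)\in\mathbb{R}^2$, and assume (C4): $d(x,y)$ is positive, twice continuously partially differentiable, with $d_{xx},d_{xy},d_{yy}>0$ for all $x,y\ge0$. Set $\Delta_1(m,n)=d(m+1,n)-d(m,n)$, $\Delta_2(m,n)=d(m,n+1)-d(m,n)$, $\Delta_q(m,n)=q\Delta_1(m,n)+(1-q)\Delta_2(m,n)$ for $(m,n)\in\mathbb{Z}_+^2$. Relay placement MDP: the state space is $\{(m,n,z):(m,n)\in\mathbb{Z}_+^2,\ z\in\{\mathsf e,\mathsf c\}\}\cup\{\phi\}$ ($(m,n)$ is the displacement of the deploying agent from the last placed relay, or from the origin if none; $z=\mathsf e$ means the lattice path has ended, $z=\mathsf c$ that it continues). Actions $u\in\{0,1\}$ ($u=1$: place a relay). From $(m,n,\mathsf c)$ with $u=0$ the next state is $(m+1,n,\mathsf c)$ w.p. $(1-p)q$, $(m+1,n,\mathsf e)$ w.p. $pq$, $(m,n+1,\mathsf c)$ w.p. $(1-p)(1-q)$, $(m,n+1,\mathsf e)$ w.p. $p(1-q)$; with $u=1$ it is $(1,0,\mathsf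 c)$, $(1,0,\mathsf e)$, $(0,1,\mathsf c)$, $(0,1,\mathsf e)$ with these same respective probabilities. At $(m,n,\mathsf e)$ only $u=1$ is allowed and the next state is the absorbing cost-free state $\phi$. One-step cost: $d(m,n)$ at $(m,n,\mathsf e)$; $\lambda+d(m,n)$ if $u=1$ at $(m,n,\mathsf c)$; $0$ otherwise. The deployment starts in state $(0,0,\mathsf c)$. $J_\lambda(m,n)$ is the optimal expected total cost (infimum over all, possibly history-dependent and randomized, policies) starting from $(m,n,\mathsf c)$, and $g^*:=J_\lambda(0,0)$. For $h\ge 0$ let $\mathcal{P}(h)=\{(m,n)\in\mathbb{Z}_+^2: p(\lambda+h)\le\Delta_q(m,n)\}$ and $\mathcal{P}^c(h)=\mathbb{Z}_+^2\setminus\mathcal{P}(h)$. Let $g(h)\in[0,\infty]$ be the expected total cost, starting from $(0,0,\mathsf c)$, of the stationary policy that in state $(m,n,\mathsf c)$ places a relay ($u=1$) if and only if $(m,n)\in\mathcal{P}(h)$. *)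

(* Defs.v *)
From Stdlib Require Import Reals Lra List.
Import ListNotations.
Open Scope R_scope.

Definition D2 (d : R -> R) (x y : R) : R := d (sqrt (x ^ 2 + y ^ 2)).

Definition dd (d : R -> R) (m n : nat) : R := D2 d (INR m) (INR n).

Definition C2_convex_incr (d : R -> R) : Prop :=
  (forall x y t, 0 <= x -> 0 <= y -> 0 <= t <= 1 ->
     d (t * x + (1 - t) * y) <= t * d x + (1 - t) * d y) /\
  (forall x y, 0 <= x -> x <= y -> d x <= d y).

Definition C3_incr_diff (d : R -> R) : Prop :=
  forall delta, 0 < delta ->
    (forall r1 r2, 0 <= r1 -> r1 <= r2 ->
        d (r1 + delta) - d r1 <= d (r2 + delta) - d r2) /\
    (forall M, exists R0, 0 <= R0 /\
        forall r, R0 <= r -> M < d (r + delta) - d r).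

Definition cont2 (f : R -> R -> R) (x y : R) : Prop :=
  forall eps, 0 < eps -> exists delta, 0 < delta /\
    forall x' y', Rabs (x' - x) < delta -> Rabs (y' - y) < delta ->
      Rabs (f x' y' - f x y) < eps.

Definition C4_smooth (d : R -> R) : Prop :=
  (forall x y, 0 <= x -> 0 <= y -> 0 < D2 d x y) /\
  exists dx dy dxx dxy dyx dyy : R -> R -> R,
    forall x y, 0 < x -> 0 < y ->
      derivable_pt_lim (fun t => D2 d t y) x (dx x y) /\
      derivable_pt_lim (fun t => D2 d x t) y (dy x y) /\
      derivable_pt_lim (fun t => dx t y) x (dxx x y) /\
      derivable_pt_lim (fun t => dx x t) y (dxy x y) /\
      derivable_pt_lim (fun t => dy t y) x (dyx x y) /\
      derivable_pt_lim (fun t => dy x t) y (dyy x y) /\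
      cont2 dxx x y /\ cont2 dxy x y /\ cont2 dyx x y /\ cont2 dyy x y /\
      0 < dxx x y /\ 0 < dxy x y /\ 0 < dyy x y.

Inductive Zflag : Type := Ze (* path ended *) | Zc (* path continues *).

Inductive St : Type :=
| Phi : St                          (* absorbing cost-free state *)
| Node : nat -> nat -> Zflag -> St.

Definition start : St := Node 0 0 Zc.

(* past (state, action) pairs; action true = place a relay (u = 1) *)
Definition Hist := list (St * bool).

(* general (history-dependent, randomized) policy: probability of u = 1
   given the history and the current state *)
Definition Policy := Hist -> St -> R.

Definition valid_policy (pi : Policy) : Prop :=
  forall h s, 0 <= pi h s <= 1.

Fixpoint Vcost (d : R -> R) (p q lam : R) (pi : Policy)
         (k : nat) (h : Hist) (s : St) {struct k} : R :=
  match k with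
  | O => 0
  | S k' =>
    match s with
    | Phi => 0
    | Node m n Ze => dd d m n + Vcost d p q lam pi k' (h ++ [(s, true)]) Phi
    | Node m n Zc =>
      let a := pi h s in
      let cont (hh : Hist) (a0 b0 : nat) :=
          (1 - p) * q * Vcost d p q lam pi k' hh (Node (S a0) b0 Zc)
        + p * q * Vcost d p q lam pi k' hh (Node (S a0) b0 Ze)
        + (1 - p) * (1 - q) * Vcost d p q lam pi k' hh (Node a0 (S b0) Zc)
        + p * (1 - q) * Vcost d p q lam pi k' hh (Node a0 (S b0) Ze) in
      a * (lam + dd d m n + cont (h ++ [(s, true)]) 0%nat 0%nat)
      + (1 - a) * cont (h ++ [(s, false)]) m n
    end
  end.

(* the expected total cost (sup over horizons) from (0,0,c) is <= c *)
Definition total_cost_le (d : R -> R) (p q lam : R) (pi : Policy) (c : R) : Prop :=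
  forall N, Vcost d p q lam pi N [] start <= c.

(* g^* = J_lambda(0,0) = inf over all policies of the total cost; g^* < h *)
Definition gstar_lt (d : R -> R) (p q lam h : R) : Prop :=
  exists pi, valid_policy pi /\
    exists c, c < h /\ total_cost_le d p q lam pi c.

Definition Delta1 (d : R -> R) (m n : nat) : R := dd d (S m) n - dd d m n.
Definition Delta2 (d : R -> R) (m n : nat) : R := dd d m (S n) - dd d m n.
Definition Deltaq (d : R -> R) (q : R) (m n : nat) : R :=
  q * Delta1 d m n + (1 - q) * Delta2 d m n.

Definition inP (d : R -> R) (p q lam h : R) (m n : nat) : Prop :=
  p * (lam + h) <= Deltaq d q m n.

Definition thr_policy (d : R -> R) (p q lam h : R) : Policy :=
  fun _ s =>
    match s with
    | Node m n Zc => if Rle_dec (p * (lam + h)) (Deltaq d q m n) then 1 else 0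
    | _ => 0
    end.

(* g(h) < h  (g(h) in [0,oo] is the total cost of thr_policy) *)
Definition g_lt (d : R -> R) (p q lam h : R) : Prop :=
  exists c, c < h /\ total_cost_le d p q lam (thr_policy d p q lam h) c.

(* Main.v *)
Require Import Defs.
From Stdlib Require Import Reals Lra Lia List Classical.
Import ListNotations.
Open Scope R_scope.

Lemma sqrt_le_of_sq x y : 0 <= y -> x <= y ^ 2 -> sqrt x <= y.
Proof. intros Hy H. rewrite <- (sqrt_pow2 y Hy). now apply sqrt_le_1_alt. Qed.

Lemma sqrt_sq x : 0 <= x -> sqrt x ^ 2 = x.
Proof. intros. simpl. rewrite Rmult_1_r. now apply sqrt_sqrt. Qed.

Lemma D2_mono d : C2_convex_incr d -> forall x x' y y', 0 <= x -> x <= x' -> 0 <= y -> y <= y' ->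
  D2 d x y <= D2 d x' y'.
Proof.
  intros [_ Hm] x x' y y' H1 H2 H3 H4. unfold D2. apply Hm. apply sqrt_pos.
  apply sqrt_le_1_alt. nra.
Qed.

Lemma right_cont d : C2_convex_incr d -> forall a s, 0 <= a -> 0 <= s <= 1 ->
  d (a + s) - d a <= s * (d (a + 1) - d a).
Proof.
  intros [Hc _] a s Ha Hs.
  assert (H := Hc a (a+1) (1 - s) Ha ltac:(lra) ltac:(lra)).
  replace ((1 - s) * a + (1 - (1 - s)) * (a + 1)) with (a + s) in H by ring. lra.
Qed.

Lemma smod_int d : C4_smooth d -> forall a b c e, 0 < a < b -> 0 < c < e ->
  0 <= D2 d b e - D2 d a e - D2 d b c + D2 d a c.
Proof.
  intros [_ [dx [dy [dxx [dxy [dyx [dyy H]]]]]]] a b c e Hab Hce.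
  assert (Hpos : forall x, 0 < x -> 0 < dx x e - dx x c).
  { intros x Hx.
    destruct (MVT_cor2 (fun t => dx x t) (fun t => dxy x t) c e ltac:(lra)) as [xi [Hxi1 Hxi2]].
    - intros t Ht. apply (H x t Hx ltac:(lra)).
    - assert (0 < dxy x xi) by (apply (H x xi Hx ltac:(lra))).
      rewrite Hxi1. nra. }
  destruct (MVT_cor2 ((fun t => D2 d t e) - (fun t => D2 d t c))%F (fun t => dx t e - dx t c) a b ltac:(lra)) as [xi [Hxi1 Hxi2]].
  - intros t Ht. apply derivable_pt_lim_minus.
    + apply (H t e ltac:(lra) ltac:(lra)).
    + apply (H t c ltac:(lra) ltac:(lra)).
  - unfold minus_fct in Hxi1. assert (0 < dx xi e - dx xi c) by (apply Hpos; lra). nra.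
Qed.

Lemma smod d : C2_convex_incr d -> C4_smooth d -> forall x0 y0, 0 <= x0 -> 0 <= y0 ->
  0 <= D2 d (x0+1) (y0+1) - D2 d x0 (y0+1) - D2 d (x0+1) y0 + D2 d x0 y0.
Proof.
  intros HC2 HC4 x0 y0 Hx Hy.
  set (T := D2 d (x0+1) (y0+1) - D2 d x0 (y0+1) - D2 d (x0+1) y0 + D2 d x0 y0).
  destruct (Rle_dec 0 T) as [HT|HT]; [exact HT|exfalso].
  set (r0 := sqrt (x0 ^ 2 + y0 ^ 2)).
  assert (Hr0 : 0 <= r0) by apply sqrt_pos.
  assert (Hr0x : x0 <= r0).
  { unfold r0. rewrite <- (sqrt_pow2 x0 Hx) at 1. apply sqrt_le_1_alt. nra. }
  assert (Hr0y : y0 <= r0).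
  { unfold r0. rewrite <- (sqrt_pow2 y0 Hy) at 1. apply sqrt_le_1_alt. nra. }
  assert (Hr0sq : r0 ^ 2 = x0 ^ 2 + y0 ^ 2) by (unfold r0; apply sqrt_sq; nra).
  set (K := d (r0 + 1) - d r0).
  assert (HK : 0 <= K). { unfold K. destruct HC2 as [_ Hm]. assert (d r0 <= d (r0+1)) by (apply Hm; lra). lra. }
  set (s := Rmin (1/2) (- T / (2 * (K + 1)))).
  assert (Hs1 : 0 < s).
  { unfold s. apply Rmin_glb_lt. lra. apply Rdiv_lt_0_compat; lra. }
  assert (Hs2 : s <= 1/2) by apply Rmin_l.
  assert (Hs3 : s * (2 * (K+1)) <= - T).
  { assert (s <= - T / (2 * (K + 1))) by apply Rmin_r.
    apply (Rmult_le_compat_r (2*(K+1))) in H; [|lra].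
    unfold Rdiv in H. rewrite Rmult_assoc, Rinv_l in H; lra. }
  set (t := s / 2).
  assert (Hi := smod_int d HC4 (x0 + t) (x0+1) (y0 + t) (y0 + 1) ltac:(unfold t; lra) ltac:(unfold t; lra)).
  assert (Hm1 : D2 d x0 (y0+1) <= D2 d (x0+t) (y0+1)) by (apply D2_mono; auto; unfold t; lra).
  assert (Hm2 : D2 d (x0+1) y0 <= D2 d (x0+1) (y0+t)) by (apply D2_mono; auto; unfold t; lra).
  assert (Hrad : sqrt ((x0+t)^2 + (y0+t)^2) <= r0 + s).
  { apply sqrt_le_of_sq. lra. assert (Hst : s = 2 * t) by (unfold t; lra). rewrite Hst.
    assert (0 < t) by (unfold t; lra).
    replace ((r0 + 2*t)^2) with (r0^2 + 4*t*r0 + 4*t^2) by ring. rewrite Hr0sq.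
    assert (0 <= t*(r0-x0)) by (apply Rmult_le_pos; lra).
    assert (0 <= t*(r0-y0)) by (apply Rmult_le_pos; lra). nra. }
  assert (Hm3 : D2 d (x0+t) (y0+t) <= d (r0 + s)).
  { unfold D2. destruct HC2 as [_ Hm]. apply Hm. apply sqrt_pos. exact Hrad. }
  assert (Hrc := right_cont d HC2 r0 s Hr0 ltac:(lra)).
  assert (HD : D2 d x0 y0 = d r0) by reflexivity.
  fold K in Hrc. assert (s*K < -T) by nra. unfold T in *. lra.
Qed.

Lemma mid_geo m n : 0 <= m -> 0 <= n ->
  2 * sqrt ((m+1)^2 + n^2) <= sqrt (m^2 + n^2) + sqrt ((m+2)^2 + n^2).
Proof.
  intros Hm Hn.
  set (a := sqrt (m^2+n^2)). set (c := sqrt ((m+2)^2+n^2)). set (b := sqrt ((m+1)^2+n^2)).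
  assert (Ha : a^2 = m^2+n^2) by (apply sqrt_sq; nra).
  assert (Hc : c^2 = (m+2)^2+n^2) by (apply sqrt_sq; nra).
  assert (Hb : b^2 = (m+1)^2+n^2) by (apply sqrt_sq; nra).
  assert (a >= 0) by (apply Rle_ge, sqrt_pos). assert (c >= 0) by (apply Rle_ge, sqrt_pos).
  assert (b >= 0) by (apply Rle_ge, sqrt_pos).
  assert (Hac : m*(m+2) + n^2 <= a * c).
  { assert ((m*(m+2) + n^2)^2 <= (a*c)^2).
    { replace ((a*c)^2) with (a^2 * c^2) by ring. rewrite Ha, Hc. nra. }
    assert (0 <= a*c) by (apply Rmult_le_pos; lra).
    destruct (Rle_dec (m*(m+2) + n^2) (a*c)) as [|Hnn]; [assumption|].
    assert (0 < (m*(m+2) + n^2 - a*c)*(m*(m+2) + n^2 + a*c)) by (apply Rmult_lt_0_compat; nra).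
    nra. }
  assert (Hsq : (2*b)^2 <= (a+c)^2) by nra.
  destruct (Rle_dec (2*b) (a+c)) as [|Hnn]; [assumption|].
  assert (0 < (2*b - (a+c))*(2*b + (a+c))) by (apply Rmult_lt_0_compat; nra).
  nra.
Qed.

Lemma convex_mid d : C2_convex_incr d -> forall a b c, 0 <= a -> 0 <= b -> 0 <= c ->
  2 * b <= a + c -> 2 * d b <= d a + d c.
Proof.
  intros [Hc Hm] a b c Ha Hb Hcc H.
  assert (H1 := Hc a c (1/2) Ha Hcc ltac:(lra)).
  assert (d b <= d (1/2 * a + (1 - 1/2) * c)) by (apply Hm; lra). lra.
Qed.

Lemma D2_comm d x y : D2 d x y = D2 d y x.
Proof. unfold D2. now rewrite Rplus_comm. Qed.

Lemma INR_SS m : INR (S (S m)) = INR m + 2.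
Proof. rewrite !S_INR. ring. Qed.

Lemma Delta1_mono_m d : C2_convex_incr d -> forall m n, Delta1 d m n <= Delta1 d (S m) n.
Proof.
  intros HC2 m n. unfold Delta1, dd. rewrite INR_SS, S_INR. unfold D2.
  assert (0 <= INR m) by apply pos_INR. assert (0 <= INR n) by apply pos_INR.
  assert (Hcv := convex_mid d HC2 (sqrt (INR m ^2 + INR n ^2)) (sqrt ((INR m + 1) ^2 + INR n ^2))
     (sqrt ((INR m + 2) ^2 + INR n ^2)) (sqrt_pos _) (sqrt_pos _) (sqrt_pos _) (mid_geo _ _ H H0)).
  lra.
Qed.

Lemma Delta2_mono_n d : C2_convex_incr d -> forall m n, Delta2 d m n <= Delta2 d m (S n).
Proof.
  intros HC2 m n. unfold Delta2, dd. rewrite (D2_comm d (INR m) (INR (S (S n)))),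
    (D2_comm d (INR m) (INR (S n))), (D2_comm d (INR m) (INR n)).
  assert (H := Delta1_mono_m d HC2 n m). unfold Delta1, dd in H. lra.
Qed.

Lemma Delta1_mono_n d : C2_convex_incr d -> C4_smooth d -> forall m n, Delta1 d m n <= Delta1 d m (S n).
Proof.
  intros HC2 HC4 m n. unfold Delta1, dd. rewrite !S_INR.
  assert (H := smod d HC2 HC4 (INR m) (INR n) (pos_INR _) (pos_INR _)). lra.
Qed.

Lemma Delta2_mono_m d : C2_convex_incr d -> C4_smooth d -> forall m n, Delta2 d m n <= Delta2 d (S m) n.
Proof.
  intros HC2 HC4 m n. unfold Delta2, dd. rewrite !S_INR.
  assert (H := smod d HC2 HC4 (INR m) (INR n) (pos_INR _) (pos_INR _)). lra.
Qed.

Lemma Deltaq_mono_m d q : 0 <= q <= 1 -> C2_convex_incr d -> C4_smooth d -> forall m n,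
  Deltaq d q m n <= Deltaq d q (S m) n.
Proof.
  intros Hq HC2 HC4 m n. unfold Deltaq.
  assert (H1 := Delta1_mono_m d HC2 m n). assert (H2 := Delta2_mono_m d HC2 HC4 m n). nra.
Qed.

Lemma Deltaq_mono_n d q : 0 <= q <= 1 -> C2_convex_incr d -> C4_smooth d -> forall m n,
  Deltaq d q m n <= Deltaq d q m (S n).
Proof.
  intros Hq HC2 HC4 m n. unfold Deltaq.
  assert (H1 := Delta1_mono_n d HC2 HC4 m n). assert (H2 := Delta2_mono_n d HC2 m n). nra.
Qed.

Lemma dd_nonneg d : C4_smooth d -> forall m n, 0 <= dd d m n.
Proof.
  intros [Hp _] m n. unfold dd. left. apply Hp; apply pos_INR.
Qed.

Definition ed (d : R -> R) (k : nat) (m n : nat) : R :=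
  match k with O => 0 | S _ => dd d m n end.

Definition Cg (p q : R) (e f : nat -> nat -> R) (a0 b0 : nat) : R :=
  (1-p)*q*f (S a0) b0 + p*q*e (S a0) b0 + (1-p)*(1-q)*f a0 (S b0) + p*(1-q)*e a0 (S b0).

Lemma Vcost_Phi d p q lam pi k hh : Vcost d p q lam pi k hh Phi = 0.
Proof. destruct k; reflexivity. Qed.

Lemma Vcost_Ze d p q lam pi k hh m n : Vcost d p q lam pi k hh (Node m n Ze) = ed d k m n.
Proof. destruct k; simpl; [reflexivity|]. rewrite Vcost_Phi. ring. Qed.

Lemma Vcost_S_Zc d p q lam pi N hh m n :
  Vcost d p q lam pi (S N) hh (Node m n Zc) =
  pi hh (Node m n Zc) * (lam + dd d m n +
     Cg p q (ed d N) (fun a b => Vcost d p q lam pi N (hh ++ [(Node m n Zc, true)]) (Node a b Zc)) 0 0)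
  + (1 - pi hh (Node m n Zc)) *
     Cg p q (ed d N) (fun a b => Vcost d p q lam pi N (hh ++ [(Node m n Zc, false)]) (Node a b Zc)) m n.
Proof. simpl. unfold Cg. rewrite !Vcost_Ze. reflexivity. Qed.

Lemma Cg_mono p q e f g a b : 0 < p < 1 -> 0 <= q <= 1 ->
  (forall x y, f x y <= g x y) -> Cg p q e f a b <= Cg p q e g a b.
Proof.
  intros Hp Hq H. unfold Cg.
  assert (H1 := H (S a) b). assert (H2 := H a (S b)).
  assert (0 <= (1-p)*q) by nra. assert (0 <= (1-p)*(1-q)) by nra. nra.
Qed.

Lemma Cg_diff p q e f g a b E : 0 < p < 1 -> 0 <= q <= 1 ->
  (forall x y, g x y - E <= f x y) -> Cg p q e g a b - (1-p) * E <= Cg p q e f a b.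
Proof.
  intros Hp Hq H. unfold Cg.
  assert (H1 := H (S a) b). assert (H2 := H a (S b)).
  assert (0 <= (1-p)*q) by nra. assert (0 <= (1-p)*(1-q)) by nra. nra.
Qed.

Lemma Cg_nonneg p q e f a b : 0 < p < 1 -> 0 <= q <= 1 ->
  (forall x y, 0 <= f x y) -> (forall x y, 0 <= e x y) -> 0 <= Cg p q e f a b.
Proof.
  intros Hp Hq H He. unfold Cg.
  assert (H1 := H (S a) b). assert (H2 := H a (S b)).
  assert (H3 := He (S a) b). assert (H4 := He a (S b)).
  assert (0 <= (1-p)*q) by nra. assert (0 <= (1-p)*(1-q)) by nra.
  assert (0 <= p*q) by nra. assert (0 <= p*(1-q)) by nra.
  assert (0 <= (1-p)*q*f (S a) b) by (apply Rmult_le_pos; lra).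
  assert (0 <= (1-p)*(1-q)*f a (S b)) by (apply Rmult_le_pos; lra).
  assert (0 <= p*q*e (S a) b) by (apply Rmult_le_pos; lra).
  assert (0 <= p*(1-q)*e a (S b)) by (apply Rmult_le_pos; lra).
  lra.
Qed.

Fixpoint Rf d p q lam (N : nat) (m n : nat) {struct N} : R :=
  match N with
  | O => 0
  | S N' => Rmin (lam + dd d m n + Cg p q (ed d N') (Rf d p q lam N') 0 0)
                 (Cg p q (ed d N') (Rf d p q lam N') m n)
  end.

Lemma min_le_comb X Y X' Y' a : 0 <= a <= 1 -> X <= X' -> Y <= Y' ->
  Rmin X Y <= a * X' + (1 - a) * Y'.
Proof.
  intros Ha H1 H2. assert (Rmin X Y <= X) by apply Rmin_l. assert (Rmin X Y <= Y) by apply Rmin_r.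
  nra.
Qed.

Lemma lemA d p q lam pi : 0 < p < 1 -> 0 <= q <= 1 -> valid_policy pi ->
  forall N hh m n, Rf d p q lam N m n <= Vcost d p q lam pi N hh (Node m n Zc).
Proof.
  intros Hp Hq Hv N. induction N as [|N IH]; intros hh m n.
  - simpl. lra.
  - rewrite Vcost_S_Zc. simpl Rf. apply min_le_comb. apply Hv.
    + apply Rplus_le_compat_l. apply Cg_mono; auto.
    + apply Cg_mono; auto.
Qed.

Fixpoint Wf d p q lam h (M : R) (K : nat) (m n : nat) {struct K} : R :=
  match K with
  | O => lam + dd d m n + h
  | S K' => if Rle_dec (p * (lam + h)) (Deltaq d q m n) then lam + dd d m n + M
            else Cg p q (dd d) (Wf d p q lam h M K') m n
  end.

Lemma Wf_S d p q lam h M K m n : Wf d p q lam h M (S K) m n =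
  if Rle_dec (p * (lam + h)) (Deltaq d q m n) then lam + dd d m n + M
            else Cg p q (dd d) (Wf d p q lam h M K) m n.
Proof. reflexivity. Qed.

Lemma Cg_dd_expand p q d f m n :
  Cg p q (dd d) f m n = (1-p)*(q*f (S m) n + (1-q)*f m (S n)) + p * (dd d m n + Deltaq d q m n).
Proof. unfold Cg, Deltaq, Delta1, Delta2. ring. Qed.

Lemma W_nonneg d p q lam h M : C4_smooth d -> 0 < p < 1 -> 0 <= q <= 1 -> 0 < lam -> 0 <= h -> 0 <= M ->
  forall K m n, 0 <= Wf d p q lam h M K m n.
Proof.
  intros HC4 Hp Hq Hl Hh HM K. induction K as [|K IH]; intros m n; simpl.
  - assert (H := dd_nonneg d HC4 m n). lra.
  - destruct Rle_dec. assert (H := dd_nonneg d HC4 m n). lra.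
    apply Cg_nonneg; auto. apply dd_nonneg; auto.
Qed.

Lemma W_dec d p q lam h M : 0 < p < 1 -> 0 <= q <= 1 -> M <= h ->
  forall K m n, Wf d p q lam h M (S K) m n <= Wf d p q lam h M K m n.
Proof.
  intros Hp Hq HM K. induction K as [|K IH]; intros m n.
  - simpl. destruct Rle_dec as [H|H]. lra.
    rewrite Cg_dd_expand. apply Rnot_le_lt in H. simpl.
    match goal with |- ?L <= _ => replace L with (lam + h - p*(lam+h) + dd d m n + Deltaq d q m n)
      by (unfold Deltaq, Delta1, Delta2; ring) end. lra.
  - change (Wf d p q lam h M (S (S K)) m n) with
     (if Rle_dec (p * (lam + h)) (Deltaq d q m n) then lam + dd d m n + M
            else Cg p q (dd d) (Wf d p q lam h M (S K)) m n).
    change (Wf d p q lam h M (S K) m n) with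
     (if Rle_dec (p * (lam + h)) (Deltaq d q m n) then lam + dd d m n + M
            else Cg p q (dd d) (Wf d p q lam h M K) m n).
    destruct Rle_dec. lra. apply Cg_mono; auto.
Qed.

Lemma W_le0 d p q lam h M : 0 < p < 1 -> 0 <= q <= 1 -> M <= h ->
  forall K m n, Wf d p q lam h M K m n <= lam + dd d m n + h.
Proof.
  intros Hp Hq HM K. induction K as [|K IH]; intros m n.
  - simpl; lra.
  - eapply Rle_trans. apply W_dec; auto. apply IH.
Qed.

Lemma W_monoM d p q lam h M M' : 0 < p < 1 -> 0 <= q <= 1 -> M <= M' ->
  forall K m n, Wf d p q lam h M K m n <= Wf d p q lam h M' K m n.
Proof.
  intros Hp Hq HM K. induction K as [|K IH]; intros m n; simpl. lra.
  destruct Rle_dec. lra. apply Cg_mono; auto.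
Qed.

Lemma ed_le d : C4_smooth d -> forall k m n, ed d k m n <= dd d m n.
Proof. intros HC4 k m n. destruct k; simpl. apply dd_nonneg; auto. lra. Qed.

Lemma Cg_e_mono p q e e' f a b : 0 < p < 1 -> 0 <= q <= 1 ->
  (forall x y, e x y <= e' x y) -> Cg p q e f a b <= Cg p q e' f a b.
Proof.
  intros Hp Hq H. unfold Cg.
  assert (H1 := H (S a) b). assert (H2 := H a (S b)).
  assert (0 <= p*q) by nra. assert (0 <= p*(1-q)) by nra. nra.
Qed.

Lemma lemB3 d p q lam h M K0 : C4_smooth d -> 0 < p < 1 -> 0 <= q <= 1 -> 0 < lam ->
  0 <= M <= h -> Cg p q (dd d) (Wf d p q lam h M K0) 0 0 <= M ->
  forall N hh m n K, Vcost d p q lam (thr_policy d p q lam h) N hh (Node m n Zc) <= Wf d p q lam h M K m n.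
Proof.
  intros HC4 Hp Hq Hl HM HK0 N. induction N as [|N IH]; intros hh m n K.
  - simpl. apply W_nonneg; auto; lra.
  - rewrite Vcost_S_Zc. unfold thr_policy at 1 3.
    assert (Hc : forall hh' a b, Cg p q (ed d N)
      (fun a0 b0 => Vcost d p q lam (thr_policy d p q lam h) N hh' (Node a0 b0 Zc)) a b
      <= Cg p q (dd d) (Wf d p q lam h M K0) a b /\
      forall K', Cg p q (ed d N)
      (fun a0 b0 => Vcost d p q lam (thr_policy d p q lam h) N hh' (Node a0 b0 Zc)) a b
      <= Cg p q (dd d) (Wf d p q lam h M K') a b).
    { intros hh' a b. split; [|intros K'];
      (eapply Rle_trans; [apply Cg_e_mono; auto; apply ed_le; auto|]; apply Cg_mono; auto). }
    destruct K as [|K].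
    + simpl Wf. destruct Rle_dec as [H|H].
      * destruct (Hc (hh ++ [(Node m n Zc, true)]) 0%nat 0%nat) as [H1 _]. lra.
      * destruct (Hc (hh ++ [(Node m n Zc, false)]) m n) as [_ H1].
        assert (H2 := H1 0%nat). assert (H3 := W_dec d p q lam h M Hp Hq (proj2 HM) 0 m n).
        rewrite Wf_S in H3. change (Wf d p q lam h M 0 m n) with (lam + dd d m n + h) in H3.
        destruct Rle_dec; [contradiction|]. lra.
    + simpl Wf. destruct Rle_dec as [H|H].
      * destruct (Hc (hh ++ [(Node m n Zc, true)]) 0%nat 0%nat) as [H1 _]. lra.
      * destruct (Hc (hh ++ [(Node m n Zc, false)]) m n) as [_ H1].
        assert (H2 := H1 K). lra.
Qed.

Fixpoint Qf d p q lam h (N : nat) (m n : nat) {struct N} : R :=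
  match N with
  | O => 0
  | S N' => Rmin (lam + h + dd d m n) (Cg p q (ed d N') (Qf d p q lam h N') m n)
  end.

Lemma Qf_S d p q lam h N m n : Qf d p q lam h (S N) m n =
  Rmin (lam + h + dd d m n) (Cg p q (ed d N) (Qf d p q lam h N) m n).
Proof. reflexivity. Qed.

Lemma Qf_1 d p q lam h m n : 0 < lam -> 0 <= h -> C4_smooth d -> Qf d p q lam h 1 m n = 0.
Proof.
  intros Hl Hh HC4. rewrite Qf_S.
  assert (E : Cg p q (ed d 0) (Qf d p q lam h 0) m n = 0) by (unfold Cg; simpl; ring).
  rewrite E. assert (H := dd_nonneg d HC4 m n). apply Rmin_right. lra.
Qed.

Lemma Eq_Dq d q m n : q * dd d (S m) n + (1-q) * dd d m (S n) = dd d m n + Deltaq d q m n.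
Proof. unfold Deltaq, Delta1, Delta2. ring. Qed.

Lemma pow_le1 r K : 0 <= r <= 1 -> 0 <= r ^ K <= 1.
Proof. intros. split. apply pow_le; lra. rewrite <- (pow1 K). apply pow_incr; lra. Qed.

Lemma lemQa d p q lam h : C2_convex_incr d -> C4_smooth d -> 0 < p < 1 -> 0 <= q <= 1 -> 0 < lam -> 0 <= h ->
  forall K m n, p * (lam + h) <= Deltaq d q m n ->
  (1 - (1-p)^K) * dd d m n + (1 - (1-p)^K * (1 + INR K * p)) * (lam + h) <= Qf d p q lam h (S K) m n.
Proof.
  intros HC2 HC4 Hp Hq Hl Hh K. induction K as [|K IH]; intros m n HS.
  - rewrite Qf_1; auto. simpl. lra.
  - rewrite Qf_S. set (P := (1-p)^K). set (L := lam + h).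
    assert (HP : 0 <= P <= 1) by (apply pow_le1; lra).
    change ((1-p)^(S K)) with ((1-p) * P). rewrite S_INR.
    assert (Hd := dd_nonneg d HC4 m n).
    apply Rmin_glb.
    + assert (0 <= (1-p)*P*dd d m n) by (apply Rmult_le_pos; nra).
      assert (0 <= (1-p)*P*(1 + (INR K + 1)*p)*L).
      { apply Rmult_le_pos. apply Rmult_le_pos. nra. assert (0 <= INR K) by apply pos_INR. nra. unfold L; lra. }
      match goal with |- ?X <= _ => replace X with (dd d m n + L - ((1-p)*P*dd d m n + (1-p)*P*(1 + (INR K + 1)*p)*L)) by ring end.
      lra.
    + change (ed d (S K)) with (dd d). rewrite Cg_dd_expand.
      assert (HS1 : p * (lam + h) <= Deltaq d q (S m) n) by (eapply Rle_trans; [exact HS|apply Deltaq_mono_m; auto]).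
      assert (HS2 : p * (lam + h) <= Deltaq d q m (S n)) by (eapply Rle_trans; [exact HS|apply Deltaq_mono_n; auto]).
      assert (I1 := IH _ _ HS1). assert (I2 := IH _ _ HS2). fold P L in I1, I2.
      set (f := Qf d p q lam h (S K)) in *.
      assert (Hqf : q * ((1 - P) * dd d (S m) n + (1 - P * (1 + INR K * p)) * L) +
                   (1-q) * ((1 - P) * dd d m (S n) + (1 - P * (1 + INR K * p)) * L)
                   <= q * f (S m) n + (1-q) * f m (S n)).
      { apply Rplus_le_compat; apply Rmult_le_compat_l; lra. }
      assert (E1 : q * ((1 - P) * dd d (S m) n + (1 - P * (1 + INR K * p)) * L) +
                   (1-q) * ((1 - P) * dd d m (S n) + (1 - P * (1 + INR K * p)) * L)
                 = (1-P) * (dd d m n + Deltaq d q m n) + (1 - P * (1 + INR K * p)) * L).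
      { rewrite <- Eq_Dq. ring. }
      rewrite E1 in Hqf.
      assert (H2 : (1-p) * ((1-P) * (dd d m n + Deltaq d q m n) + (1 - P * (1 + INR K * p)) * L)
                   <= (1-p) * (q * f (S m) n + (1-q) * f m (S n))) by (apply Rmult_le_compat_l; lra).
      assert (E2 : (1-p) * ((1-P) * (dd d m n + Deltaq d q m n) + (1 - P * (1 + INR K * p)) * L)
                   + p * (dd d m n + Deltaq d q m n)
                   - ((1 - (1-p)*P) * dd d m n + (1 - (1-p)*P * (1 + (INR K + 1) * p)) * L)
                   = (1 - (1-p)*P) * (Deltaq d q m n - p * L)) by ring.
      assert (0 <= (1 - (1-p)*P) * (Deltaq d q m n - p * L)).
      { apply Rmult_le_pos. nra. unfold L; lra. }
      lra.
Qed.

Lemma lemD d p q lam h : C2_convex_incr d -> C4_smooth d -> 0 < p < 1 -> 0 <= q <= 1 -> 0 < lam -> 0 <= h ->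
  forall K m n,
  Wf d p q lam h h (S K) m n - (1-p)^K * (dd d m n + (1 + INR K * p) * (lam + h)) <= Qf d p q lam h (S K) m n.
Proof.
  intros HC2 HC4 Hp Hq Hl Hh K. induction K as [|K IH]; intros m n.
  - rewrite Qf_1; auto. assert (H := W_le0 d p q lam h h Hp Hq (Rle_refl _) 1 m n). change ((1-p)^0) with 1. change (INR 0) with 0. lra.
  - set (P := (1-p)^K). set (L := lam + h).
    assert (HP : 0 <= P <= 1) by (apply pow_le1; lra).
    change ((1-p)^(S K)) with ((1-p) * P). rewrite S_INR.
    assert (Hd := dd_nonneg d HC4 m n).
    rewrite Wf_S. destruct Rle_dec as [HS|HS].
    + assert (H := lemQa d p q lam h HC2 HC4 Hp Hq Hl Hh (S K) m n HS).
      change ((1-p)^(S K)) with ((1-p) * P) in H. rewrite S_INR in H. fold L in H.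
      match goal with |- ?X <= _ => replace X with
        ((1 - (1-p)*P) * dd d m n + (1 - (1-p)*P * (1 + (INR K + 1) * p)) * L) by (unfold L; ring) end.
      exact H.
    + apply Rnot_le_lt in HS. rewrite Qf_S. apply Rmin_glb.
      * assert (H := W_le0 d p q lam h h Hp Hq (Rle_refl _) (S (S K)) m n).
        rewrite Wf_S in H. destruct Rle_dec; [lra|].
        assert (0 <= (1-p)*P*(dd d m n + (1 + (INR K + 1)*p)*L)).
        { apply Rmult_le_pos. nra. assert (0 <= INR K) by apply pos_INR. assert (0 <= 1 + (INR K + 1)*p) by nra. apply Rplus_le_le_0_compat; [lra|apply Rmult_le_pos; unfold L; lra]. }
        unfold L in *. lra.
      * change (ed d (S K)) with (dd d). rewrite !Cg_dd_expand.
        assert (I1 := IH (S m) n). assert (I2 := IH m (S n)). fold P L in I1, I2.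
        set (f := Qf d p q lam h (S K)) in *. set (w := Wf d p q lam h h (S K)) in *.
        assert (Hqf : q * (w (S m) n - P * (dd d (S m) n + (1 + INR K * p) * L)) +
                   (1-q) * (w m (S n) - P * (dd d m (S n) + (1 + INR K * p) * L))
                   <= q * f (S m) n + (1-q) * f m (S n)).
        { apply Rplus_le_compat; apply Rmult_le_compat_l; lra. }
        assert (E1 : q * (w (S m) n - P * (dd d (S m) n + (1 + INR K * p) * L)) +
                   (1-q) * (w m (S n) - P * (dd d m (S n) + (1 + INR K * p) * L))
                 = q * w (S m) n + (1-q) * w m (S n) - P * (dd d m n + Deltaq d q m n + (1 + INR K * p) * L)).
        { rewrite <- Eq_Dq. ring. }
        rewrite E1 in Hqf.
        assert (H2 := Rmult_le_compat_l (1-p) _ _ ltac:(lra) Hqf).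
        assert (0 <= (1-p) * P * (p*L - Deltaq d q m n)).
        { apply Rmult_le_pos. nra. unfold L; lra. }
        match goal with |- ?X <= _ => assert (E3 : X =
          (1-p) * (q * w (S m) n + (1-q) * w m (S n) - P * (dd d m n + Deltaq d q m n + (1 + INR K * p) * L))
          + p * (dd d m n + Deltaq d q m n) - (1-p) * P * (p*L - Deltaq d q m n)) by ring end.
        lra.
Qed.

Definition sig d p q lam N : R := Cg p q (ed d N) (Rf d p q lam N) 0 0.

Fixpoint Errf d p q lam h (N : nat) : R :=
  match N with
  | O => 0
  | S N' => Rmax (h - sig d p q lam N') ((1-p) * Errf d p q lam h N')
  end.

Lemma lemC d p q lam h : 0 < p < 1 -> 0 <= q <= 1 ->
  forall N m n, Qf d p q lam h N m n - Errf d p q lam h N <= Rf d p q lam N m n.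
Proof.
  intros Hp Hq N. induction N as [|N IH]; intros m n.
  - simpl. lra.
  - rewrite Qf_S. simpl Rf. simpl Errf. fold (sig d p q lam N).
    assert (H := Cg_diff p q (ed d N) (Rf d p q lam N) (Qf d p q lam h N) m n (Errf d p q lam h N) Hp Hq
      ltac:(intros; apply IH)).
    assert (M1 := Rmax_l (h - sig d p q lam N) ((1-p) * Errf d p q lam h N)).
    assert (M2 := Rmax_r (h - sig d p q lam N) ((1-p) * Errf d p q lam h N)).
    set (E := Rmax (h - sig d p q lam N) ((1-p) * Errf d p q lam h N)) in *.
    assert (Rmin (lam + h + dd d m n) (Cg p q (ed d N) (Qf d p q lam h N) m n) <= lam + h + dd d m n) by apply Rmin_l.
    assert (Rmin (lam + h + dd d m n) (Cg p q (ed d N) (Qf d p q lam h N) m n) <= Cg p q (ed d N) (Qf d p q lam h N) m n) by apply Rmin_r.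
    apply Rmin_glb; lra.
Qed.

Lemma cube_nonneg N : 0 <= INR N * (INR N - 1) * (INR N - 2).
Proof.
  destruct N as [|[|[|k]]].
  - simpl. lra.
  - simpl. lra.
  - simpl. lra.
  - rewrite !S_INR. assert (0 <= INR k) by apply pos_INR.
    replace ((INR k + 1 + 1 + 1) * (INR k + 1 + 1 + 1 - 1) * (INR k + 1 + 1 + 1 - 2)) with
      ((INR k + 3) * ((INR k + 2) * (INR k + 1))) by ring.
    apply Rmult_le_pos; [lra|]. apply Rmult_le_pos; lra.
Qed.

Lemma binom3 t N : 0 <= t ->
  1 + INR N * t + INR N * (INR N - 1) / 2 * t^2 + INR N * (INR N - 1) * (INR N - 2) / 6 * t^3 <= (1+t)^N.
Proof.
  intros Ht. induction N as [|N IH].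
  - simpl. lra.
  - rewrite S_INR. simpl pow at 3.
    assert (H1 := Rmult_le_compat_l (1+t) _ _ ltac:(lra) IH).
    assert (H2 := cube_nonneg N).
    assert (H3 : 0 <= INR N * (INR N - 1) * (INR N - 2) * t^4) by (apply Rmult_le_pos; [lra|apply pow_le; lra]).
    match goal with |- ?X <= _ => assert (E : (1+t) * (1 + INR N * t + INR N * (INR N - 1) / 2 * t^2 + INR N * (INR N - 1) * (INR N - 2) / 6 * t^3) = X + INR N * (INR N - 1) * (INR N - 2) * t^4 / 6) by (simpl; field) end.
    lra.
Qed.

Lemma lim_lemma r A B eps : 0 < r < 1 -> 0 <= A -> 0 <= B -> 0 < eps ->
  exists N, (1 <= N)%nat /\ r ^ N * (A + B * INR N ^ 2) < eps.
Proof.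
  intros Hr HA HB He.
  set (t := / r - 1).
  assert (Ht : 0 < t). { unfold t. assert (1 < / r). { rewrite <- Rinv_1. apply Rinv_lt_contravar; lra. } lra. }
  assert (Ht3 : 0 < t^3) by (apply pow_lt; lra).
  set (X := 54 * (A + B) / (eps * t^3)).
  assert (HX : 0 <= X). { unfold X. apply Rmult_le_pos. lra. left. apply Rinv_0_lt_compat. nra. }
  destruct (archimed_cor1 (/ (X + 1))) as [N0 [HN0 HN0']].
  { apply Rinv_0_lt_compat. lra. }
  assert (HN0r : X + 1 < INR N0).
  { assert (0 < INR N0) by (apply lt_0_INR; lia).
    destruct (Rlt_or_le (X+1) (INR N0)) as [|Hle]; [assumption|].
    assert (/ (X+1) <= / INR N0) by (apply Rinv_le_contravar; lra). lra. }
  exists (N0 + 3)%nat. split; [lia|].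
  set (N := INR (N0 + 3)).
  assert (HN : N = INR N0 + 3) by (unfold N; rewrite plus_INR; simpl; ring).
  assert (HN3 : 3 <= N) by lra.
  assert (Hb := binom3 t (N0 + 3) (Rlt_le _ _ Ht)). fold N in Hb.
  assert (Hc : N^3 * t^3 / 54 <= (1+t)^(N0+3)).
  { assert (0 <= N * t) by nra. assert (0 <= N * (N - 1) / 2 * t^2) by (assert (0 < t^2) by (apply pow_lt; lra); nra).
    assert (N^3/54 <= N * (N-1) * (N-2) / 6) by nra.
    assert (N^3 * t^3/54 <= N * (N-1) * (N-2) / 6 * t^3) by nra. lra. }
  assert (HXN : 54 * (A + B) < eps * t^3 * N).
  { assert (X < N) by lra. unfold X in H.
    apply (Rmult_lt_compat_r (eps * t^3)) in H; [|nra].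
    unfold Rdiv in H. rewrite Rmult_assoc, Rinv_l in H by nra. lra. }
  assert (Hpow : r ^ (N0+3) * (1+t) ^ (N0+3) = 1).
  { rewrite <- Rpow_mult_distr. unfold t. replace (r * (1 + (/ r - 1))) with 1 by (field; lra). apply pow1. }
  assert (Hrp : 0 < r ^ (N0 + 3)) by (apply pow_lt; lra).
  assert (H1 : A + B * N^2 <= (A + B) * N^2) by (assert (1 <= N^2) by nra; assert (0 <= A*(N^2-1)) by (apply Rmult_le_pos; lra); nra).
  assert (H2 : (A + B) * N^2 < eps * (1+t)^(N0+3)).
  { assert (0 < N^2) by nra. nra. }
  assert (r ^ (N0 + 3) * (A + B * N^2) < r^(N0+3) * (eps * (1+t)^(N0+3))).
  { apply Rmult_lt_compat_l; auto. lra. }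
  replace (r ^ (N0 + 3) * (eps * (1 + t) ^ (N0 + 3))) with (eps * (r ^ (N0+3) * (1+t) ^ (N0+3))) in H by ring.
  rewrite Hpow, Rmult_1_r in H.
  exact H.
Qed.

Lemma no_all_high d p q lam h c : C2_convex_incr d -> C4_smooth d -> 0 < p < 1 -> 0 <= q <= 1 -> 0 < lam ->
  0 <= c -> c < h -> (forall N, sig d p q lam N <= c) ->
  (forall K, h <= Cg p q (dd d) (Wf d p q lam h h K) 0 0) -> False.
Proof.
  intros HC2 HC4 Hp Hq Hl Hc Hch Hsig Hhigh.
  set (L := lam + h). set (D1 := q * dd d 1 0 + (1-q) * dd d 0 1).
  assert (HD1 : 0 <= D1).
  { unfold D1. assert (H1 := dd_nonneg d HC4 1 0). assert (H2 := dd_nonneg d HC4 0 1). nra. }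
  set (B := D1 + L).
  set (Er := Errf d p q lam h).
  assert (S1 : forall K, h - ((1-p)^(S K) * (D1 + (1 + INR K * p) * L)) - (1-p) * Er (S K) <= sig d p q lam (S K)).
  { intros K. unfold sig.
    assert (Ha := Cg_diff p q (ed d (S K)) (Rf d p q lam (S K)) (Qf d p q lam h (S K)) 0 0 (Er (S K)) Hp Hq
      ltac:(intros; apply lemC; auto)).
    change (ed d (S K)) with (dd d) in *.
    assert (Hb := Hhigh (S K)).
    rewrite !Cg_dd_expand in *.
    assert (I1 := lemD d p q lam h HC2 HC4 Hp Hq Hl ltac:(lra) K 1 0).
    assert (I2 := lemD d p q lam h HC2 HC4 Hp Hq Hl ltac:(lra) K 0 1).
    fold L in I1, I2.
    set (P := (1-p)^K) in *. change ((1-p)^(S K)) with ((1-p) * P).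
    set (f := Qf d p q lam h (S K)) in *. set (w := Wf d p q lam h h (S K)) in *.
    assert (Hqf : q * (w 1%nat 0%nat - P * (dd d 1 0 + (1 + INR K * p) * L)) +
                   (1-q) * (w 0%nat 1%nat - P * (dd d 0 1 + (1 + INR K * p) * L))
                   <= q * f 1%nat 0%nat + (1-q) * f 0%nat 1%nat).
    { apply Rplus_le_compat; apply Rmult_le_compat_l; lra. }
    assert (E1 : q * (w 1%nat 0%nat - P * (dd d 1 0 + (1 + INR K * p) * L)) +
                   (1-q) * (w 0%nat 1%nat - P * (dd d 0 1 + (1 + INR K * p) * L))
                 = q * w 1%nat 0%nat + (1-q) * w 0%nat 1%nat - P * (D1 + (1 + INR K * p) * L))
      by (unfold D1; ring).
    rewrite E1 in Hqf.
    assert (H2 := Rmult_le_compat_l (1-p) _ _ ltac:(lra) Hqf).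
    lra. }
  assert (S3 : forall K, Er (S K) <= (1-p)^K * (h + B * INR K ^ 2)).
  { intros K. induction K as [|K IH].
    - unfold Er. simpl Errf. unfold sig.
      assert (E : Cg p q (ed d 0) (Rf d p q lam 0) 0 0 = 0) by (unfold Cg; simpl; ring).
      rewrite E. simpl. apply Rmax_lub; lra.
    - change (Er (S (S K))) with (Rmax (h - sig d p q lam (S K)) ((1-p) * Er (S K))). apply Rmax_lub.
      + assert (H := S1 K). 
        set (P := (1-p)^K) in *. change ((1-p)^(S K)) with ((1-p) * P) in *.
        assert (HP : 0 <= P <= 1) by (apply pow_le1; lra).
        rewrite S_INR.
        assert (HK : 0 <= INR K) by apply pos_INR.
        assert (Hx : D1 + (1 + INR K * p) * L + (h + B * INR K ^ 2) <= h + B * (INR K + 1)^2).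
        { unfold B, L. assert (0 <= INR K * p * (lam + h)) by (apply Rmult_le_pos; nra).
          assert (0 <= INR K*(lam+h)*(1-p)) by (apply Rmult_le_pos; [apply Rmult_le_pos|]; lra).
          assert (INR K * p * (lam+h) <= INR K * (lam + h)) by nra.
          nra. }
        assert (Hy := Rmult_le_compat_l ((1-p)*P) _ _ ltac:(nra) Hx).
        assert (Hz := Rmult_le_compat_l (1-p) _ _ ltac:(lra) IH).
        fold P in Hz. lra.
      + assert (Hz := Rmult_le_compat_l (1-p) _ _ ltac:(lra) IH).
        set (P := (1-p)^K) in *. change ((1-p)^(S K)) with ((1-p) * P).
        assert (HP : 0 <= P <= 1) by (apply pow_le1; lra).
        rewrite S_INR. assert (HK : 0 <= INR K) by apply pos_INR.
        assert (0 <= B) by (unfold B, L; lra).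
        assert (Hx : h + B * INR K ^ 2 <= h + B * (INR K + 1) ^ 2) by nra.
        assert (Hy := Rmult_le_compat_l ((1-p)*P) _ _ ltac:(nra) Hx). rewrite <- Rmult_assoc in Hz. lra. }
  assert (HB : 0 <= B) by (unfold B, L; lra).
  destruct (lim_lemma (1-p) h B (h - c) ltac:(lra) ltac:(lra) HB ltac:(lra)) as [N [HN1 HN2]].
  destruct N as [|K]; [lia|].
  assert (H1 := S3 (S K)).
  change (Er (S (S K))) with (Rmax (h - sig d p q lam (S K)) ((1-p) * Er (S K))) in H1.
  assert (H2 := Rmax_l (h - sig d p q lam (S K)) ((1-p) * Er (S K))).
  assert (H3 := Hsig (S K)). lra.
Qed.

Theorem lemma3 (d : R -> R) (p q lam : R)
  (hp : 0 < p < 1) (hq : 0 <= q <= 1) (hlam : 0 < lam)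
  (C1 : 0 < d 0) (C2 : C2_convex_incr d) (C3 : C3_incr_diff d)
  (C4 : C4_smooth d)
  (h : R) (hgt : gstar_lt d p q lam h) :
  g_lt d p q lam h.
Proof.
  destruct hgt as [pi [Hv [c [Hch Hc]]]].
  assert (Hc0 : 0 <= c) by (apply (Hc 0%nat)).
  assert (Hsig : forall N, sig d p q lam N <= c).
  { intros N. assert (H := Hc (S N)). unfold start in H.
    assert (H2 := lemA d p q lam pi hp hq Hv (S N) [] 0 0).
    simpl Rf in H2. fold (sig d p q lam N) in H2.
    rewrite Rmin_right in H2. lra. assert (H3 := dd_nonneg d C4 0 0). lra. }
  destruct (classic (exists K, Cg p q (dd d) (Wf d p q lam h h K) 0 0 < h)) as [[K0 HK0]|Hn].
  2:{ exfalso. apply (no_all_high d p q lam h c C2 C4 hp hq hlam Hc0 Hch Hsig).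
      intros K. apply Rnot_lt_le. intro H. apply Hn. exists K. exact H. }
  set (M := Cg p q (dd d) (Wf d p q lam h h K0) 0 0) in *.
  assert (HM0 : 0 <= M).
  { unfold M. apply Cg_nonneg; auto. intros; apply W_nonneg; auto; lra. apply dd_nonneg; auto. }
  assert (HMf : Cg p q (dd d) (Wf d p q lam h M K0) 0 0 <= M).
  { unfold M at 2. apply Cg_mono; auto. intros; apply W_monoM; auto; lra. }
  assert (HnS : ~ (p * (lam + h) <= Deltaq d q 0 0)).
  { intro HS.
    assert (HS1 : p * (lam + h) <= Deltaq d q 1 0) by (eapply Rle_trans; [exact HS|apply Deltaq_mono_m; auto]).
    assert (HS2 : p * (lam + h) <= Deltaq d q 0 1) by (eapply Rle_trans; [exact HS|apply Deltaq_mono_n; auto]).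
    assert (HW : forall a b, p * (lam + h) <= Deltaq d q a b -> Wf d p q lam h h K0 a b = lam + dd d a b + h).
    { intros a b Hab. destruct K0 as [|K']. reflexivity. rewrite Wf_S. destruct Rle_dec; [reflexivity|contradiction]. }
    unfold M in HK0. rewrite Cg_dd_expand in HK0. rewrite (HW _ _ HS1), (HW _ _ HS2) in HK0.
    assert (E : q * (lam + dd d 1 0 + h) + (1-q) * (lam + dd d 0 1 + h) = lam + h + dd d 0 0 + Deltaq d q 0 0).
    { transitivity (lam + h + (q*dd d 1 0 + (1-q)*dd d 0 1)); [ring|]. rewrite Eq_Dq. ring. }
    rewrite E in HK0. assert (H0 := dd_nonneg d C4 0 0). nra. }
  exists M. split; [exact HK0|].
  intros N. unfold start. destruct N as [|N]. simpl. exact HM0.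
  rewrite Vcost_S_Zc.
  assert (Ht : thr_policy d p q lam h [] (Node 0 0 Zc) = 0)
    by (unfold thr_policy; destruct Rle_dec; [contradiction|reflexivity]).
  rewrite Ht.
  assert (H := lemB3 d p q lam h M K0 C4 hp hq hlam ltac:(lra) HMf).
  assert (H2 : Cg p q (ed d N) (fun a b => Vcost d p q lam (thr_policy d p q lam h) N ([] ++ [(Node 0 0 Zc, false)]) (Node a b Zc)) 0 0
               <= Cg p q (dd d) (Wf d p q lam h M K0) 0 0).
  { eapply Rle_trans; [apply Cg_e_mono; auto; apply ed_le; auto|]. apply Cg_mono; auto. }
  lra.
Qed.
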